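(* Let $G$ be a digraph and let $\alpha^{(n+1)}>\gamma^{(n)}>\beta^{(n-1)}$ be allowed elementary paths on $G$ (of lengths $n+1,n,n-1$). Write $\alpha=v_0v_1\cdots v_{n+1}$. Then either (a) there exists an allowed elementary $n$-path $\gamma'\neq\gamma$ with $\alpha>\gamma'>\beta$; or (b) $\beta$ is obtained from $\alpha$ by removing two subsequent vertices $v_i\to v_{i+1}$ for some $0\le i\le n$.
   Context: A digraph $G=(V,E)$ consists of a set $V$ and $E\subseteq(V\times V)\setminus\{(v,v)\}$; $(u,v)\in E$ is written $u\to v$. An allowed elementary $n$-path is a sequence $v_0\cdots v_n$ of vertices with $v_{i-1}\to v_i\in E$ for $1\le i\le n$. For allowed elementary paths, $\gamma'<\gamma$ (equivalently $\gamma>\gamma'$) means $\gamma'$ is obtained from $\gamma$ by deleting some of its entries. *)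

(* Defs.v *)
From mathcomp Require Import all_boot.
Set Implicit Arguments. Unset Strict Implicit. Unset Printing Implicit Defensive.

Definition digraph (V : Type) (E : V -> V -> Prop) : Prop :=
  forall v, ~ E v v.

Fixpoint allowed (V : Type) (E : V -> V -> Prop) (s : seq V) : Prop :=
  match s with
  | x :: ((y :: _) as t) => E x y /\ allowed E t
  | _ => True
  end.

Definition allowed_path (V : Type) (E : V -> V -> Prop) (n : nat) (s : seq V) : Prop :=
  size s = n.+1 /\ allowed E s.

Definition path_lt (V : Type) (g' g : seq V) : Prop :=
  exists m : bitseq, size m = size g /\ g' = mask m g /\ size g' < size g.

(* Main.v *)
Require Import Defs.
From mathcomp Require Import all_boot.
From Stdlib Require Import ClassicalEpsilon.

Section Aux.
Variables (V : Type) (E : V -> V -> Prop).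

Definition eb : rel V := fun a b => if excluded_middle_informative (E a b) then true else false.

Lemma ebP a b : eb a b <-> E a b.
Proof. rewrite /eb; case: excluded_middle_informative => //. Qed.

Lemma allowedE s : allowed E s <-> sorted eb s.
Proof.
elim: s => // x [|y t] IH //.
have -> : allowed E [:: x, y & t] = (E x y /\ allowed E (y::t)) by [].
rewrite IH /=; split.
- by case=> /ebP -> ->.
- by case/andP=> /ebP.
Qed.

Lemma mask_full (m : bitseq) (s : seq V) :
  size m = size s -> size (mask m s) = size s -> mask m s = s.
Proof.
elim: s m => [|z s IH] [|b m] //= [Hm].
case: b => /=; first by case=> /(IH _ Hm) ->.
move=> Hs; have := size_mask Hm; have := count_size id m.
by rewrite Hs Hm => Hle Heq; move: Hle; rewrite -Heq ltnn.
Qed.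

Lemma mask_rm1 (m : bitseq) (s : seq V) :
  size m = size s -> (size (mask m s)).+1 = size s ->
  exists a x b, s = a ++ x :: b /\ mask m s = a ++ b.
Proof.
elim: s m => [|z s IH] [|b m] //= [Hm].
case: b => /=.
- case=> /(IH _ Hm) [a [x [c [-> ->]]]].
  by exists (z :: a), x, c.
- case=> Hs; exists [::], z, s; split=> //=.
  exact: mask_full.
Qed.

Lemma split_eq (a b c d : seq V) y :
  a ++ b = c ++ y :: d ->
  (exists a2, a = c ++ y :: a2 /\ d = a2 ++ b) \/
  (exists c2, c = a ++ c2 /\ b = c2 ++ y :: d).
Proof.
elim: a c => [|z a IH] c /=.
- by move=> ->; right; exists c.
- case: c => [|w c] /=.
  + by case=> -> <-; left; exists a.
  + case=> -> /IH [[a2 [-> ->]]|[c2 [-> ->]]].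
    * by left; exists a2.
    * by right; exists c2.
Qed.

Lemma path_lt_rm (A B : seq V) x : path_lt (A ++ B) (A ++ x :: B).
Proof.
exists (nseq (size A) true ++ false :: nseq (size B) true).
split; last split.
- by rewrite !size_cat /= !size_nseq.
- by rewrite mask_cat ?size_nseq //= !mask_true.
- by rewrite !size_cat /= addnS ltnS.
Qed.

Lemma size_ins (A C : seq V) y : size (A ++ y :: C) = (size (A ++ C)).+1.
Proof. by rewrite !size_cat /= addnS. Qed.

Lemma core n A x B y C gamma :
  digraph E ->
  size (A ++ x :: B ++ y :: C) = n.+2 -> size (A ++ B ++ C) = n ->
  allowed E (A ++ x :: B ++ y :: C) -> allowed E (A ++ B ++ C) ->
  gamma = A ++ B ++ y :: C \/ gamma = A ++ x :: B ++ C ->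
  (exists gamma' : seq V,
      allowed_path E n gamma' /\ gamma' <> gamma /\
      path_lt gamma' (A ++ x :: B ++ y :: C) /\ path_lt (A ++ B ++ C) gamma')
  \/
  (exists i : nat, i <= n /\ A ++ B ++ C = take i (A ++ x :: B ++ y :: C) ++ drop i.+2 (A ++ x :: B ++ y :: C)).
Proof.
move=> HG Sa Sb /allowedE Aa /allowedE Ab Hg.
case: B Sa Sb Aa Ab Hg => [|b B] Sa Sb Aa Ab Hg.
- right; exists (size A); split.
  + by rewrite -Sb size_cat leq_addr.
  + rewrite /= take_size_cat //.
    have -> : A ++ [:: x, y & C] = (A ++ [:: x; y]) ++ C by rewrite -catA.
    have -> : (size A).+2 = size (A ++ [:: x; y]) by rewrite size_cat addn2.
    by rewrite drop_size_cat.
- left.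
  have S1 : size (A ++ (b :: B) ++ y :: C) = n.+1.
    by rewrite catA size_ins -catA Sb.
  have S2 : size (A ++ x :: (b :: B) ++ C) = n.+1.
    by rewrite size_ins Sb.
  move: Aa; rewrite sorted_cat_cons => /andP [AaA].
  rewrite /= => /andP [Hxb Aab].
  move: Ab; rewrite /= sorted_cat_cons => /andP [AbA Abb].
  have A1 : allowed E (A ++ (b :: B) ++ y :: C).
    by apply/allowedE; rewrite /= sorted_cat_cons AbA.
  have A2 : allowed E (A ++ x :: (b :: B) ++ C).
    apply/allowedE; rewrite sorted_cat_cons AaA /= Hxb.
    move: Aab Abb; rewrite !cat_path => /andP [H1 _] /andP [_ H2].
    by rewrite H1 H2.
  have Hne : A ++ (b :: B) ++ y :: C <> A ++ x :: (b :: B) ++ C.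
    move=> H; have := congr1 (drop (size A)) H; rewrite !drop_size_cat //.
    case=> Exb; rewrite Exb in Hxb; by move/ebP: Hxb => /HG.
  have L1a : path_lt (A ++ (b :: B) ++ y :: C) (A ++ x :: (b :: B) ++ y :: C).
    exact: path_lt_rm.
  have L2a : path_lt (A ++ x :: (b :: B) ++ C) (A ++ x :: (b :: B) ++ y :: C).
    by have := path_lt_rm (A ++ x :: b :: B) C y; rewrite -!catA.
  have L1b : path_lt (A ++ (b :: B) ++ C) (A ++ (b :: B) ++ y :: C).
    by have := path_lt_rm (A ++ b :: B) C y; rewrite -!catA.
  have L2b : path_lt (A ++ (b :: B) ++ C) (A ++ x :: (b :: B) ++ C).
    exact: path_lt_rm.
  case: Hg => ->.
  + exists (A ++ x :: (b :: B) ++ C); do !split => //.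
    by move=> H; apply: Hne; rewrite H.
  + by exists (A ++ (b :: B) ++ y :: C); do !split.

Qed.

End Aux.
Arguments split_eq {V a b c d y}.
Arguments core {V E n A x B y C gamma}.

Theorem proposition2p3 (V : Type) (E : V -> V -> Prop) (n : nat)
  (alpha gamma beta : seq V) :
  digraph E -> 1 <= n ->
  allowed_path E n.+1 alpha -> allowed_path E n gamma -> allowed_path E n.-1 beta ->
  path_lt gamma alpha -> path_lt beta gamma ->
  (exists gamma' : seq V,
      allowed_path E n gamma' /\ gamma' <> gamma /\
      path_lt gamma' alpha /\ path_lt beta gamma')
  \/
  (exists i : nat, i <= n /\ beta = take i alpha ++ drop i.+2 alpha).
Proof.
move=> HG Hn [Sa Aa] [Sg Ag] [Sb Ab] [m1 [Hm1 [Hg _]]] [m2 [Hm2 [Hb _]]].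
have [a [x [b [Ea Eg]]]] : exists a x b, alpha = a ++ x :: b /\ gamma = a ++ b.
  by rewrite Hg; apply: mask_rm1 => //; rewrite -Hg Sg Sa.
have [c [y [d [Eg' Eb]]]] : exists c y d, gamma = c ++ y :: d /\ beta = c ++ d.
  by rewrite Hb; apply: mask_rm1 => //; rewrite -Hb Sg Sb prednK.
have Ebb : a ++ b = c ++ y :: d by rewrite -Eg -Eg'.
have Sb' : size beta = n by rewrite Sb prednK.
case: (split_eq Ebb) => [[a2 [Ea2 Ed]]|[c2 [Ec Eb2]]].
- rewrite Ea Eb Eg Ea2 Ed -!catA /= in Aa Ab Sa Sb' *.
  by apply: (core HG Sa Sb' Aa Ab); right.
- rewrite Ea Eb Eg Ec Eb2 -!catA in Aa Ab Sa Sb' *.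
  by apply: (core HG Sa Sb' Aa Ab); left.
Qed.
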